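(* Let $f:\mathbb{X}\to\mathbb{R}$ be a (finite, real-valued) measurable function. If $$\mu\Big(\bigcup_{N>0}\bigcap_{n>N}\{B_nf\le 0\}\Big)>0,$$ i.e. the set of points $x$ such that $B_nf(x)\le 0$ for all sufficiently large $n$ has positive measure, then $\sup_{n>0}\sum_{i=0}^{n-1}f\circ T^i<\infty$ $\mu$-a.e. on $\mathbb{X}$.
   Context: Standing assumptions: $(\mathbb{X},\mathcal{X},\mu,T)$ is a probability space ($\mu(\mathbb{X})=1$) with $T$ an invertible, bi-measurable, measure-preserving, ergodic transformation. For a measurable $f:\mathbb{X}\to\mathbb{R}$ and $n\ge 0$, the symmetric bilateral averages are $B_nf=\frac{1}{2n+1}\sum_{i=-n}^{n}f\circ T^i$. *)

(* Defs.v *)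
From Stdlib Require Import Reals ZArith.
Open Scope R_scope.

Definition is_sigma_algebra {X : Type} (M : (X -> Prop) -> Prop) : Prop :=
  M (fun _ => True) /\
  (forall A, M A -> M (fun x => ~ A x)) /\
  (forall A : nat -> X -> Prop, (forall n, M (A n)) -> M (fun x => exists n, A n x)).

Definition is_probability_space {X : Type} (M : (X -> Prop) -> Prop)
    (mu : (X -> Prop) -> R) : Prop :=
  is_sigma_algebra M /\
  (forall A, M A -> 0 <= mu A) /\
  (forall A : nat -> X -> Prop,
      (forall n, M (A n)) ->
      (forall n m x, n <> m -> A n x -> A m x -> False) ->
      infinite_sum (fun n => mu (A n)) (mu (fun x => exists n, A n x))) /\
  mu (fun _ => True) = 1.

Definition measurable_fun {X : Type} (M : (X -> Prop) -> Prop) (f : X -> R) : Prop :=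
  forall a : R, M (fun x => f x <= a).

Definition invertible_mpt {X : Type} (M : (X -> Prop) -> Prop)
    (mu : (X -> Prop) -> R) (T Tinv : X -> X) : Prop :=
  (forall x, Tinv (T x) = x) /\ (forall x, T (Tinv x) = x) /\
  (forall A, M A -> M (fun x => A (T x))) /\
  (forall A, M A -> M (fun x => A (Tinv x))) /\
  (forall A, M A -> mu (fun x => A (T x)) = mu A).

Definition ergodic {X : Type} (M : (X -> Prop) -> Prop)
    (mu : (X -> Prop) -> R) (T : X -> X) : Prop :=
  forall A, M A -> (forall x, A (T x) <-> A x) -> mu A = 0 \/ mu A = 1.

Definition Tpow {X : Type} (T Tinv : X -> X) (i : Z) (x : X) : X :=
  match i with
  | Z0 => x
  | Zpos p => Nat.iter (Pos.to_nat p) T x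
  | Zneg p => Nat.iter (Pos.to_nat p) Tinv x
  end.

(** symmetric bilateral average B_n f = (1/(2n+1)) sum_{i=-n}^{n} f o T^i *)
Definition Bavg {X : Type} (T Tinv : X -> X) (f : X -> R) (n : nat) (x : X) : R :=
  / INR (2 * n + 1) *
  sum_f_R0 (fun k => f (Tpow T Tinv (Z.of_nat k - Z.of_nat n)%Z x)) (2 * n).

Definition Bsum {X : Type} (T : X -> X) (f : X -> R) (n : nat) (x : X) : R :=
  match n with
  | O => 0
  | S m => sum_f_R0 (fun i => f (Nat.iter i T x)) m
  end.

(* Main.v *)
Require Import Defs.
From Stdlib Require Import Reals ZArith Lia Lra List ClassicalEpsilon Classical
  FunctionalExtensionality PropExtensionality.
Open Scope R_scope.

Lemma pext {X : Type} (A B : X -> Prop) : (forall x, A x <-> B x) -> A = B.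
Proof.
  intro H; apply functional_extensionality; intro x; apply propositional_extensionality; auto.
Qed.

Definition ind {X : Type} (S : X -> Prop) (x : X) : R :=
  if excluded_middle_informative (S x) then 1 else 0.

Lemma ind_1 {X} (S : X -> Prop) x : S x -> ind S x = 1.
Proof. unfold ind; destruct (excluded_middle_informative (S x)); tauto. Qed.
Lemma ind_0 {X} (S : X -> Prop) x : ~ S x -> ind S x = 0.
Proof. unfold ind; destruct (excluded_middle_informative (S x)); tauto. Qed.
Lemma ind_bnd {X} (S : X -> Prop) x : 0 <= ind S x <= 1.
Proof. unfold ind; destruct (excluded_middle_informative (S x)); lra. Qed.

Fixpoint sumr (g : nat -> R) (s L : nat) : R :=
  match L with O => 0 | S L' => g s + sumr g (S s) L' end.

Lemma sumr_split g a : forall s b, sumr g s (a + b) = sumr g s a + sumr g (s + a) b.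
Proof.
  induction a; intros s b; simpl.
  - rewrite Nat.add_0_r; ring.
  - rewrite IHa. replace (S s + a)%nat with (s + S a)%nat by lia. ring.
Qed.

Lemma sumr_ext g h s L : (forall i, (s <= i < s + L)%nat -> g i = h i) ->
  sumr g s L = sumr h s L.
Proof.
  revert s; induction L; intros s H; simpl; auto.
  rewrite (H s) by lia. rewrite (IHL (S s)); auto. intros; apply H; lia.
Qed.

Lemma sumr_shift g L : forall s t, sumr g (s + t) L = sumr (fun j => g (s + j)%nat) t L.
Proof.
  induction L; intros s t; simpl; auto.
  rewrite <- IHL. replace (S (s + t)) with (s + S t)%nat by lia. auto.
Qed.

Lemma sumr_nonneg g s L : (forall i, 0 <= g i) -> 0 <= sumr g s L.
Proof. revert s; induction L; intros s H; simpl; [lra|]. specialize (IHL (S s) H). specialize (H s). lra. Qed.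

Lemma sumr_le_len g s L : (forall i, g i <= 1) -> sumr g s L <= INR L.
Proof. revert s; induction L; intros s H; simpl sumr; [simpl; lra|]. rewrite S_INR. specialize (IHL (S s) H). specialize (H s). lra. Qed.

Lemma sumr_mono_len g s L L' : (forall i, 0 <= g i) -> (L <= L')%nat -> sumr g s L <= sumr g s L'.
Proof.
  intros H HL. replace L' with (L + (L' - L))%nat by lia. rewrite sumr_split.
  pose proof (sumr_nonneg g (s + L) (L' - L) H). lra.
Qed.

Lemma sumr_compl g s L : sumr (fun i => 1 - g i) s L = INR L - sumr g s L.
Proof. revert s; induction L; intros s; simpl sumr; [simpl; lra|]. rewrite IHL, S_INR. lra. Qed.

Lemma sumr_zero g s L : (forall i, (s <= i < s + L)%nat -> g i = 0) -> sumr g s L = 0.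
Proof. intro H. rewrite (sumr_ext g (fun _ => 0)); auto. clear H. revert s; induction L; intros; simpl; auto. rewrite IHL; ring. Qed.

Lemma sum_f_R0_sumr h n : sum_f_R0 h n = sumr h 0 (S n).
Proof.
  induction n; simpl sum_f_R0.
  - simpl; ring.
  - rewrite IHn. replace (S (S n)) with (S n + 1)%nat by lia. rewrite sumr_split. simpl. ring.
Qed.

Lemma small_inv (e : R) : e > 0 -> exists m : nat, / (INR m + 1) < e.
Proof.
  intro He. destruct (INR_unbounded (/ e)) as [m Hm]. exists m.
  pose proof (pos_INR m).
  apply Rmult_lt_reg_r with (INR m + 1); [lra|].
  rewrite Rinv_l by lra.
  apply Rmult_lt_reg_l with (/ e). apply Rinv_0_lt_compat; lra.
  rewrite <- Rmult_assoc, Rinv_l, Rmult_1_l, Rmult_1_r by lra. lra.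
Qed.

Lemma infsum_evconst s l N0 : (forall n, (n >= N0)%nat -> sum_f_R0 s n = l) -> infinite_sum s l.
Proof.
  intros H eps He. exists N0. intros n Hn. rewrite H by auto. unfold Rdist. rewrite Rminus_diag, Rabs_R0. lra.
Qed.

Lemma infsum_le s l c : infinite_sum s l -> (forall n, sum_f_R0 s n <= c) -> l <= c.
Proof.
  intros H Hc. destruct (Rle_dec l c) as [|Hn]; auto. exfalso.
  destruct (H (l - c)) as [N HN]; [lra|]. specialize (HN N (le_n _)). specialize (Hc N).
  unfold Rdist in HN. rewrite Rabs_left1 in HN by lra. lra.
Qed.

Lemma sum_const c n : sum_f_R0 (fun _ => c) n = (INR n + 1) * c.
Proof. induction n; simpl sum_f_R0. simpl; ring. rewrite IHn, S_INR. ring. Qed.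
Fixpoint mx (h : nat -> R) (n : nat) : R :=
  match n with O => h O | S n' => Rmax (mx h n') (h (S n')) end.

Lemma mx_ge h n : forall j, (j <= n)%nat -> h j <= mx h n.
Proof.
  induction n; intros j Hj.
  - replace j with O by lia. simpl; lra.
  - simpl. destruct (Nat.eq_dec j (S n)) as [->|Hne].
    + apply Rmax_r.
    + eapply Rle_trans; [apply IHn; lia|apply Rmax_l].
Qed.

Lemma bound_gen (g : nat -> R) (P : nat -> Prop) N M0 :
  (forall c k, P c -> (k <= c)%nat -> (k > N)%nat -> sumr g (c - k) (2 * k + 1) <= 0) ->
  (forall m, (m >= M0)%nat -> exists c, P c /\ (m <= 2 * c + 1)%nat /\ (c + N + 2 <= m)%nat) ->
  forall m, sumr g 0 m <= mx (fun j => sumr g 0 j) M0.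
Proof.
  intros Hrefl Hgap m. induction m as [m IH] using (well_founded_induction lt_wf).
  destruct (le_lt_dec m M0) as [Hm|Hm].
  - apply (mx_ge (fun j => sumr g 0 j)); auto.
  - destruct (Hgap m ltac:(lia)) as [c [Hc [H1 H2]]].
    set (k := (m - c - 1)%nat).
    assert (Hk1 : (k <= c)%nat) by (unfold k; lia).
    assert (Hk2 : (k > N)%nat) by (unfold k; lia).
    replace m with ((c - k) + (2 * k + 1))%nat by (unfold k; lia).
    rewrite sumr_split. simpl (0 + (c - k))%nat.
    pose proof (Hrefl c k Hc Hk1 Hk2). pose proof (IH (c - k)%nat ltac:(unfold k; lia)). lra.
Qed.

Lemma gap_gen (a : nat -> R) (P : nat -> Prop) p N (K1 K2 : nat) : p > 0 ->
  (forall c, ~ P c -> a c = 0) ->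
  (forall n, sumr a 0 n - 5 * p / 4 * INR n < INR K1) ->
  (forall n, sumr a 0 n > 3 * p / 4 * INR n - INR K2) ->
  exists M0, forall m, (m >= M0)%nat -> exists c, P c /\ (m <= 2 * c + 1)%nat /\ (c + N + 2 <= m)%nat.
Proof.
  intros Hp Ha H1 H2.
  destruct (INR_unbounded (8 * (3 * p / 4 * (INR N + 1) + INR K1 + INR K2) / p)) as [M1 HM1].
  exists (M1 + 2 * N + 4)%nat. intros m Hm.
  apply NNPP; intro Hno.
  set (lo := (m / 2)%nat).
  assert (Hlo1 : (2 * lo <= m)%nat) by (unfold lo; apply Nat.Div0.mul_div_le; lia).
  assert (Hlo2 : (m <= 2 * lo + 1)%nat).
  { unfold lo. pose proof (Nat.div_mod_eq m 2). pose proof (Nat.mod_upper_bound m 2 ltac:(lia)). lia. }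
  assert (Hz : sumr a lo (m - N - 1 - lo) = 0).
  { apply sumr_zero. intros i Hi. apply Ha. intro HP. apply Hno. exists i. repeat split; auto; lia. }
  pose proof (sumr_split a lo 0 (m - N - 1 - lo)) as Hs.
  replace (lo + (m - N - 1 - lo))%nat with (m - N - 1)%nat in Hs by lia.
  simpl (0 + lo)%nat in Hs. rewrite Hz, Rplus_0_r in Hs.
  specialize (H1 lo). specialize (H2 (m - N - 1)%nat). rewrite Hs in H2.
  rewrite !minus_INR in H2 by lia.
  assert (Hl : 2 * INR lo <= INR m).
  { replace 2 with (INR 2) by (simpl; lra). rewrite <- mult_INR. apply le_INR; auto. }
  assert (HmM : INR m >= INR M1) by (apply Rle_ge, le_INR; lia).
  simpl (INR 1) in H2.
  set (Q := 8 * (3 * p / 4 * (INR N + 1) + INR K1 + INR K2)) in *.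
  assert (Hk : p * INR M1 > Q).
  { apply (Rmult_lt_compat_l p) in HM1; auto.
    assert (HQ : p * (Q / p) = Q) by (field; lra). lra. }
  unfold Q in Hk.
  nra.
Qed.
Section Meas.
Context {X : Type} (M : (X -> Prop) -> Prop) (mu : (X -> Prop) -> R)
  (Hprob : is_probability_space M mu).

Lemma M_True : M (fun _ => True).
Proof. destruct Hprob as [[H _] _]; auto. Qed.
Lemma M_compl A : M A -> M (fun x => ~ A x).
Proof. destruct Hprob as [[_ [H _]] _]; auto. Qed.
Lemma M_cunion (A : nat -> X -> Prop) : (forall n, M (A n)) -> M (fun x => exists n, A n x).
Proof. destruct Hprob as [[_ [_ H]] _]; auto. Qed.
Lemma mu_nonneg A : M A -> 0 <= mu A.
Proof. destruct Hprob as [_ [H _]]; auto. Qed.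
Lemma mu_True : mu (fun _ => True) = 1.
Proof. destruct Hprob as [_ [_ [_ H]]]; auto. Qed.

Lemma M_ext A B : (forall x, A x <-> B x) -> M A -> M B.
Proof. intros H; rewrite (pext A B H); auto. Qed.

Lemma M_False : M (fun _ => False).
Proof. apply (M_ext (fun x => ~ True)); [tauto|]. apply M_compl, M_True. Qed.

Lemma M_const (P : Prop) : M (fun _ => P).
Proof.
  destruct (classic P).
  - apply (M_ext (fun _ => True)); [tauto|apply M_True].
  - apply (M_ext (fun _ => False)); [tauto|apply M_False].
Qed.

Lemma M_or A B : M A -> M B -> M (fun x => A x \/ B x).
Proof.
  intros HA HB. apply (M_ext (fun x => exists n, (match n with O => A | _ => B end) x)).
  - intro x; split; [intros [[|n] H]; auto|intros [H|H]; [exists O|exists 1%nat]; auto].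
  - apply M_cunion; intros [|n]; auto.
Qed.

Lemma M_and A B : M A -> M B -> M (fun x => A x /\ B x).
Proof.
  intros HA HB. apply (M_ext (fun x => ~ (~ A x \/ ~ B x))).
  - intro x; tauto.
  - apply M_compl, M_or; apply M_compl; auto.
Qed.

Lemma M_call (A : nat -> X -> Prop) : (forall n, M (A n)) -> M (fun x => forall n, A n x).
Proof.
  intros H. apply (M_ext (fun x => ~ exists n, ~ A n x)).
  - intro x; split; [intros H1 n; apply NNPP; intro; apply H1; eauto|intros H1 [n Hn]; auto].
  - apply M_compl, M_cunion; intros; apply M_compl; auto.
Qed.

Lemma M_imp_const (P : Prop) A : M A -> M (fun x => P -> A x).
Proof.
  intro HA; destruct (classic P).
  - apply (M_ext A); [tauto|auto].
  - apply (M_ext (fun _ => True)); [tauto|apply M_True].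
Qed.

Lemma M_and_const (P : Prop) A : M A -> M (fun x => P /\ A x).
Proof. intro; apply M_and; auto; apply M_const. Qed.

Lemma mu_ext A B : (forall x, A x <-> B x) -> mu A = mu B.
Proof. intros H; rewrite (pext A B H); auto. Qed.

Lemma mu_False : mu (fun _ => False) = 0.
Proof.
  destruct Hprob as [_ [_ [Hs _]]].
  specialize (Hs (fun _ _ => False) (fun _ => M_False) (fun _ _ _ _ H _ => H)). cbv beta in Hs.
  rewrite (mu_ext (fun x => exists n : nat, False) (fun _ => False)) in Hs
    by (intro; split; [intros [_ []]|intros []]).
  set (c := mu (fun _ => False)) in *.
  assert (Hc : 0 <= c) by (apply mu_nonneg, M_False).
  destruct (Req_dec c 0) as [|Hne]; auto. exfalso.
  destruct (Hs c) as [N HN]; [lra|]. specialize (HN (S N) ltac:(lia)).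
  rewrite sum_const in HN. unfold Rdist in HN. rewrite S_INR in HN.
  pose proof (pos_INR N). rewrite Rabs_right in HN by nra. nra.
Qed.

Lemma mu_add A B : M A -> M B -> (forall x, A x -> B x -> False) ->
  mu (fun x => A x \/ B x) = mu A + mu B.
Proof.
  intros HA HB Hd.
  destruct Hprob as [_ [_ [Hs _]]].
  set (F := fun n : nat => match n with O => A | 1%nat => B | _ => fun _ => False end).
  assert (HF : forall n, M (F n)) by (intros [|[|n]]; simpl; auto using M_False).
  assert (HFd : forall n m x, n <> m -> F n x -> F m x -> False).
  { intros [|[|n]] [|[|m]] x Hnm; simpl; try tauto; eauto. }
  specialize (Hs F HF HFd).
  rewrite (mu_ext (fun x => exists n, F n x) (fun x => A x \/ B x)) in Hs.
  2:{ intro x; split; [intros [[|[|n]] H]; simpl in H; tauto|intros [H|H]; [exists O|exists 1%nat]; auto]. }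
  apply (uniqueness_sum _ _ _ Hs). apply infsum_evconst with 1%nat.
  intros n Hn. induction n; [lia|]. destruct n; [simpl; ring|].
  replace (sum_f_R0 (fun n => mu (F n)) (S (S n))) with (sum_f_R0 (fun k => mu (F k)) (S n) + mu (fun _ => False)) by reflexivity.
  rewrite IHn by lia. rewrite mu_False. ring.
Qed.

Lemma mu_mono A B : M A -> M B -> (forall x, A x -> B x) -> mu A <= mu B.
Proof.
  intros HA HB H.
  rewrite (mu_ext B (fun x => A x \/ (B x /\ ~ A x))) by (intro x; specialize (H x); tauto).
  rewrite mu_add; auto. pose proof (mu_nonneg _ (M_and _ _ HB (M_compl _ HA))). lra.
  apply M_and; auto; apply M_compl; auto. intros; tauto.
Qed.

Lemma mu_le1 A : M A -> mu A <= 1.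
Proof. intro; rewrite <- mu_True; apply mu_mono; auto using M_True. Qed.

Lemma mu_compl A : M A -> mu (fun x => ~ A x) = 1 - mu A.
Proof.
  intro HA. rewrite <- mu_True. rewrite (mu_ext (fun _ => True) (fun x => A x \/ ~ A x)) by (intro; tauto).
  rewrite mu_add; auto using M_compl. ring.
Qed.

Lemma mu_split A S : M A -> M S -> mu A = mu (fun x => A x /\ S x) + mu (fun x => A x /\ ~ S x).
Proof.
  intros HA HS. rewrite <- mu_add by (auto using M_and, M_compl; intros; tauto).
  apply mu_ext; intro; tauto.
Qed.

Lemma mu_subadd A B : M A -> M B -> mu (fun x => A x \/ B x) <= mu A + mu B.
Proof.
  intros HA HB.
  rewrite (mu_ext _ (fun x => A x \/ (B x /\ ~ A x))) by (intro; tauto).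
  rewrite mu_add by (auto using M_and, M_compl; intros; tauto).
  pose proof (mu_mono (fun x => B x /\ ~ A x) B ltac:(auto using M_and, M_compl) HB ltac:(intros x [Hx _]; exact Hx)). lra.
Qed.

Lemma mu_incr_le (B : nat -> X -> Prop) c :
  (forall n, M (B n)) -> (forall n x, B n x -> B (S n) x) -> (forall n, mu (B n) <= c) ->
  mu (fun x => exists n, B n x) <= c.
Proof.
  intros HB Hinc Hc.
  assert (Hmono : forall n m x, (n <= m)%nat -> B n x -> B m x).
  { intros n m x Hnm; induction Hnm; auto. }
  set (D := fun n : nat => match n with O => B O | S n' => fun x => B (S n') x /\ ~ B n' x end).
  assert (HD : forall n, M (D n)) by (intros [|n]; simpl; auto using M_and, M_compl).
  assert (HDB : forall n x, D n x -> B n x) by (intros [|n] x; simpl; tauto).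
  assert (HDd : forall n m x, n <> m -> D n x -> D m x -> False).
  { intros n m x Hnm. 
    assert (forall n m, (n < m)%nat -> D n x -> D m x -> False).
    { intros a [|b] Hab Ha Hb; [lia|]. simpl in Hb. apply Hb. apply (Hmono a); [lia|auto]. }
    destruct (Nat.lt_total n m) as [|[|]]; eauto. }
  destruct Hprob as [_ [_ [Hs _]]].
  specialize (Hs D HD HDd).
  rewrite (mu_ext (fun x => exists n, D n x) (fun x => exists n, B n x)) in Hs.
  2:{ intro x; split; [intros [n H]; eauto|intros [n H]].
      induction n; [exists O; auto|]. destruct (classic (B n x)); auto. exists (S n); simpl; auto. }
  apply (infsum_le _ _ _ Hs). intro n.
  assert (sum_f_R0 (fun k => mu (D k)) n = mu (B n)).
  { induction n; simpl; auto. rewrite IHn.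
    rewrite (mu_ext (B (S n)) (fun x => B n x \/ (B (S n) x /\ ~ B n x))) by (intro x; split; [tauto|intros [|]; [apply Hinc|]; tauto]).
    rewrite mu_add; auto using M_and, M_compl. intros; tauto. }
  rewrite H; auto.
Qed.


Definition mf (g : X -> R) := forall a, M (fun x => g x <= a).

Lemma mf_lt g b : mf g -> M (fun x => g x < b).
Proof.
  intro Hg. apply (M_ext (fun x => exists m : nat, g x <= b - / (INR m + 1))).
  - intro x; split.
    + intros [m Hm]. pose proof (pos_INR m). assert (0 < / (INR m + 1)) by (apply Rinv_0_lt_compat; lra). lra.
    + intro H. destruct (small_inv (b - g x)) as [m Hm]; [lra|]. exists m; lra.
  - apply M_cunion; intro; apply Hg.
Qed.

Lemma mf_ge g b : mf g -> M (fun x => g x >= b).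
Proof. intro Hg. apply (M_ext (fun x => ~ g x < b)); [intro; lra|]. apply M_compl, mf_lt; auto. Qed.

Lemma mf_gt g b : mf g -> M (fun x => g x > b).
Proof. intro Hg. apply (M_ext (fun x => ~ g x <= b)); [intro; lra|]. apply M_compl, Hg. Qed.

Lemma mf_const c : mf (fun _ => c).
Proof. intro a; apply M_const. Qed.

Lemma IZR_nats z : IZR z = INR (Z.to_nat z) - INR (Z.to_nat (- z)).
Proof.
  rewrite !INR_IZR_INZ, !ZifyInst.of_nat_to_nat_eq, <- minus_IZR. f_equal. lia.
Qed.

Lemma dense_q u v : u < v -> exists i j k : nat, u < (INR i - INR j) / (INR k + 1) < v.
Proof.
  intro Huv. destruct (small_inv (v - u)) as [k Hk]; [lra|].
  pose proof (pos_INR k). set (d := INR k + 1) in *.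
  assert (Hd : 0 < d) by (unfold d; lra).
  destruct (archimed (u * d)) as [H1 H2].
  exists (Z.to_nat (up (u * d))), (Z.to_nat (- up (u * d))), k. fold d.
  rewrite <- IZR_nats.
  assert (Hk' : 1 < (v - u) * d).
  { apply (Rmult_lt_compat_r d) in Hk; auto. rewrite Rinv_l in Hk by lra. lra. }
  split.
  - apply Rmult_lt_reg_r with d; auto. unfold Rdiv. rewrite Rmult_assoc, Rinv_l, Rmult_1_r by lra. lra.
  - apply Rmult_lt_reg_r with d; auto. unfold Rdiv. rewrite Rmult_assoc, Rinv_l, Rmult_1_r by lra. lra.
Qed.

Lemma mf_plus g h : mf g -> mf h -> mf (fun x => g x + h x).
Proof.
  intros Hg Hh a.
  apply (M_ext (fun x => ~ exists i j k : nat,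
     g x > (INR i - INR j) / (INR k + 1) /\ h x > a - (INR i - INR j) / (INR k + 1))).
  - intro x; split.
    + intro H. apply Rnot_lt_le. intro Hlt. apply H.
      destruct (dense_q (a - h x) (g x)) as [i [j [k Hq]]]; [lra|]. exists i, j, k; lra.
    + intros Hle [i [j [k Hq]]]. lra.
  - apply M_compl. do 3 (apply M_cunion; intro). apply M_and; apply mf_gt; auto.
Qed.

Lemma mf_scal c g : mf g -> mf (fun x => c * g x).
Proof.
  intros Hg a. destruct (Rtotal_order c 0) as [Hc|[Hc|Hc]].
  - apply (M_ext (fun x => g x >= a / c)); [|apply mf_ge; auto].
    intro x. assert (Ea : a = c * (a / c)) by (field; lra).
    set (b := a / c) in *. rewrite Ea. split; intro H; nra.
  - subst c. apply (M_ext (fun _ => 0 <= a)); [intro; rewrite Rmult_0_l; tauto|apply M_const].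
  - apply (M_ext (fun x => g x <= a / c)); [|apply Hg].
    intro x. assert (Ea : a = c * (a / c)) by (field; lra).
    set (b := a / c) in *. rewrite Ea. split; intro H; nra.
Qed.

Lemma mf_ind S : M S -> mf (ind S).
Proof.
  intros HS a. destruct (Rle_dec 1 a).
  - apply (M_ext (fun _ => True)); [|apply M_True]. intro x; pose proof (ind_bnd S x); split; intros; [lra|auto].
  - destruct (Rle_dec 0 a).
    + apply (M_ext (fun x => ~ S x)); [|apply M_compl; auto].
      intro x; split; intro H.
      * rewrite ind_0; auto.
      * intro Hs. rewrite ind_1 in H; auto.
    + apply (M_ext (fun _ => False)); [|apply M_False]. intro x; pose proof (ind_bnd S x); split; intros; [tauto|lra].
Qed.

Lemma mf_sumr (G : nat -> X -> R) s L : (forall i, mf (G i)) -> mf (fun x => sumr (fun i => G i x) s L).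
Proof.
  intro HG. revert s; induction L; intro s; simpl.
  - apply mf_const.
  - apply mf_plus; auto.
Qed.

Lemma mf_sum_f_R0 (G : nat -> X -> R) n : (forall i, mf (G i)) -> mf (fun x => sum_f_R0 (fun i => G i x) n).
Proof.
  intro HG. assert (E : (fun x => sum_f_R0 (fun i => G i x) n) = (fun x => sumr (fun i => G i x) 0 (S n))).
  { apply functional_extensionality; intro; apply sum_f_R0_sumr. }
  rewrite E; apply mf_sumr; auto.
Qed.

Lemma mf_comp g (F : X -> X) : (forall A, M A -> M (fun x => A (F x))) -> mf g -> mf (fun x => g (F x)).
Proof. intros HF Hg a; apply (HF (fun y => g y <= a)); apply Hg. Qed.


Definition lsum (l : list (R * (X -> Prop))) (x : X) : R :=
  fold_right (fun p acc => fst p * ind (snd p) x + acc) 0 l.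
Definition msum (l : list (R * (X -> Prop))) (D : X -> Prop) : R :=
  fold_right (fun p acc => fst p * mu (fun x => snd p x /\ D x) + acc) 0 l.

Lemma msum_split l D S : M D -> M S -> (forall p, In p l -> M (snd p)) ->
  msum l D = msum l (fun x => D x /\ S x) + msum l (fun x => D x /\ ~ S x).
Proof.
  intros HD HS; induction l as [|[w S'] l IH]; intros Hl; simpl; [ring|].
  rewrite IH by (intros; apply Hl; simpl; auto).
  assert (HS' : M S') by (apply (Hl (w, S')); simpl; auto).
  rewrite (mu_split (fun x => S' x /\ D x) S) by (auto using M_and).
  rewrite (mu_ext (fun x => (S' x /\ D x) /\ S x) (fun x => S' x /\ D x /\ S x)) by (intro; tauto).
  rewrite (mu_ext (fun x => (S' x /\ D x) /\ ~ S x) (fun x => S' x /\ D x /\ ~ S x)) by (intro; tauto).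
  ring.
Qed.

Lemma integ l : forall D c, M D -> (forall p, In p l -> M (snd p)) ->
  (forall x, D x -> 0 <= c + lsum l x) -> 0 <= c * mu D + msum l D.
Proof.
  induction l as [|[w S] l IH]; intros D c HD Hl Hpt; simpl.
  - destruct (classic (exists x, D x)) as [[x Hx]|Hn].
    + specialize (Hpt x Hx). simpl in Hpt. pose proof (mu_nonneg D HD). nra.
    + rewrite (mu_ext D (fun _ => False)) by (intro x; split; [intro; apply Hn; eauto|tauto]).
      rewrite mu_False. lra.
  - assert (HS : M S) by (apply (Hl (w, S)); simpl; auto).
    assert (Hl' : forall p, In p l -> M (snd p)) by (intros; apply Hl; simpl; auto).
    pose proof (IH (fun x => D x /\ S x) (c + w) ltac:(auto using M_and) Hl') as H1.
    pose proof (IH (fun x => D x /\ ~ S x) c ltac:(auto using M_and, M_compl) Hl') as H2.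
    assert (P1 : forall x, D x /\ S x -> 0 <= c + w + lsum l x).
    { intros x [Hx Hs]. specialize (Hpt x Hx). simpl in Hpt. rewrite ind_1 in Hpt by auto. lra. }
    assert (P2 : forall x, D x /\ ~ S x -> 0 <= c + lsum l x).
    { intros x [Hx Hs]. specialize (Hpt x Hx). simpl in Hpt. rewrite ind_0 in Hpt by auto. lra. }
    specialize (H1 P1). specialize (H2 P2).
    rewrite (msum_split l D S) by auto.
    rewrite (mu_split D S) by auto.
    rewrite (mu_ext (fun x => S x /\ D x) (fun x => D x /\ S x)) by (intro; tauto).
    lra.
Qed.


Context (T Tinv : X -> X) (HT : invertible_mpt M mu T Tinv).

Lemma M_preT A : M A -> M (fun x => A (T x)).
Proof. destruct HT as [_ [_ [H _]]]; auto. Qed.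
Lemma M_preTinv A : M A -> M (fun x => A (Tinv x)).
Proof. destruct HT as [_ [_ [_ [H _]]]]; auto. Qed.
Lemma mu_preT A : M A -> mu (fun x => A (T x)) = mu A.
Proof. destruct HT as [_ [_ [_ [_ H]]]]; auto. Qed.

Lemma M_iter n : forall A, M A -> M (fun x => A (Nat.iter n T x)).
Proof. induction n; intros A HA; simpl; auto. apply (IHn (fun y => A (T y))), M_preT; auto. Qed.
Lemma M_iterinv n : forall A, M A -> M (fun x => A (Nat.iter n Tinv x)).
Proof. induction n; intros A HA; simpl; auto. apply (IHn (fun y => A (Tinv y))), M_preTinv; auto. Qed.
Lemma mu_iter n : forall A, M A -> mu (fun x => A (Nat.iter n T x)) = mu A.
Proof.
  induction n; intros A HA; simpl; auto.
  rewrite (IHn (fun y => A (T y))) by (apply M_preT; auto). apply mu_preT; auto.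
Qed.

Lemma mf_Tpow g z : mf g -> mf (fun x => g (Tpow T Tinv z x)).
Proof.
  intro Hg. destruct z; simpl.
  - auto.
  - apply mf_comp; auto. intros; apply M_iter; auto.
  - apply mf_comp; auto. intros; apply M_iterinv; auto.
Qed.

Lemma mf_Bavg f n : mf f -> mf (Bavg T Tinv f n).
Proof.
  intro Hf. unfold Bavg. apply mf_scal.
  apply (mf_sum_f_R0 (fun k x => f (Tpow T Tinv (Z.of_nat k - Z.of_nat n) x))).
  intro; apply mf_Tpow; auto.
Qed.

Definition Dn (A : X -> Prop) (n : nat) (x : X) : R :=
  sumr (fun i => ind A (Nat.iter i T x)) 0 n.

Lemma mf_Dn A n : M A -> mf (Dn A n).
Proof.
  intro HA. unfold Dn. apply (mf_sumr (fun i x => ind A (Nat.iter i T x))).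
  intro i. apply mf_comp; [intros; apply M_iter; auto|apply mf_ind; auto].
Qed.

Lemma Dn_shift A n s x : Dn A n (Nat.iter s T x) = sumr (fun c => ind A (Nat.iter c T x)) s n.
Proof.
  unfold Dn. pose proof (sumr_shift (fun c => ind A (Nat.iter c T x)) n s 0) as E.
  rewrite Nat.add_0_r in E. rewrite E.
  apply sumr_ext; intros i _. rewrite <- Nat.iter_add. f_equal. f_equal. lia.
Qed.

Lemma Dn_S A n x : Dn A (S n) x = ind A x + Dn A n (T x).
Proof.
  change (T x) with (Nat.iter 1 T x). rewrite Dn_shift. reflexivity.
Qed.

Definition Bmax (A : X -> Prop) (beta : R) (K : nat) (y : X) : Prop :=
  exists n, (n <= K)%nat /\ Dn A n y > beta * INR n.

Lemma count_lemma A beta K x : 0 <= beta -> forall L s,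
  beta * sumr (fun c => ind (Bmax A beta K) (Nat.iter c T x)) s L <=
  sumr (fun c => ind A (Nat.iter c T x)) s (L + K).
Proof.
  intros Hb. set (a := fun c => ind A (Nat.iter c T x)).
  set (b := fun c => ind (Bmax A beta K) (Nat.iter c T x)).
  assert (Ha0 : forall i, 0 <= a i) by (intro; apply ind_bnd).
  assert (Hb0 : forall i, 0 <= b i) by (intro; apply ind_bnd).
  assert (Hb1 : forall i, b i <= 1) by (intro; apply ind_bnd).
  intro L. induction L as [L IH] using (well_founded_induction lt_wf). intro s.
  destruct L as [|L'].
  - simpl sumr at 1. rewrite Rmult_0_r. apply sumr_nonneg; auto.
  - destruct (classic (Bmax A beta K (Nat.iter s T x))) as [HB|HB].
    + destruct HB as [n [HnK Hn]]. rewrite Dn_shift in Hn. fold a in Hn.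
      assert (Hn0 : (n > 0)%nat) by (destruct n; [simpl in Hn; lra|lia]).
      destruct (le_lt_dec (S L') n) as [HLn|HLn].
      * pose proof (sumr_le_len b s (S L') Hb1).
        assert (INR (S L') <= INR n) by (apply le_INR; auto).
        pose proof (sumr_mono_len a s n (S L' + K) Ha0 ltac:(lia)).
        nra.
      * replace (S L') with (n + (S L' - n))%nat by lia. rewrite sumr_split.
        replace (n + (S L' - n) + K)%nat with (n + ((S L' - n) + K))%nat by lia. rewrite sumr_split.
        pose proof (IH (S L' - n)%nat ltac:(lia) (s + n)%nat).
        pose proof (sumr_le_len b s n Hb1). nra.
    + simpl sumr. unfold b at 1. rewrite ind_0 by auto.
      pose proof (IH L' ltac:(lia) (S s)). fold a b. pose proof (Ha0 s). lra.
Qed.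

Lemma lsum_app l1 l2 x : lsum (l1 ++ l2) x = lsum l1 x + lsum l2 x.
Proof. induction l1; simpl; [ring|]. unfold lsum in *. simpl. rewrite IHl1. ring. Qed.
Lemma msum_app l1 l2 D : msum (l1 ++ l2) D = msum l1 D + msum l2 D.
Proof. induction l1; simpl; [ring|]. unfold msum in *. simpl. rewrite IHl1. ring. Qed.

Lemma lsum_map w P s L x :
  lsum (map (fun c => (w, fun y => P (Nat.iter c T y))) (seq s L)) x =
  w * sumr (fun c => ind P (Nat.iter c T x)) s L.
Proof. revert s; induction L; intro s; simpl; [ring|]. unfold lsum in *. simpl. rewrite IHL. unfold ind. ring. Qed.

Lemma msum_map w P s L : M P ->
  msum (map (fun c => (w, fun y => P (Nat.iter c T y))) (seq s L)) (fun _ => True) = w * INR L * mu P.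
Proof.
  intro HP. revert s; induction L; intro s; simpl; [ring|]. unfold msum in *. simpl. rewrite IHL.
  rewrite (mu_ext (fun x => P (Nat.iter s T x) /\ True) (fun x => P (Nat.iter s T x))) by (intro; tauto).
  rewrite mu_iter by auto. destruct L; simpl; ring.
Qed.

Lemma M_Bmax A beta K : M A -> M (Bmax A beta K).
Proof.
  intro HA. unfold Bmax. apply M_cunion. intro n. apply M_and_const. apply mf_gt, mf_Dn; auto.
Qed.

Lemma maximal_fin A beta K : M A -> 0 <= beta -> beta * mu (Bmax A beta K) <= mu A.
Proof.
  intros HA Hb.
  assert (HBm := M_Bmax A beta K HA).
  assert (Hineq : forall L : nat, beta * INR L * mu (Bmax A beta K) <= INR (L + K) * mu A).
  { intro L.
    pose proof (integ (map (fun c => (1, fun y => A (Nat.iter c T y))) (seq 0 (L + K)) ++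
                      map (fun c => (- beta, fun y => Bmax A beta K (Nat.iter c T y))) (seq 0 L))
                  (fun _ => True) 0 (M_True) ) as H.
    rewrite msum_app, !msum_map in H by auto.
    assert (Hin : forall p, In p (map (fun c => (1, fun y => A (Nat.iter c T y))) (seq 0 (L + K)) ++
                      map (fun c => (- beta, fun y => Bmax A beta K (Nat.iter c T y))) (seq 0 L)) -> M (snd p)).
    { intros p Hp. apply in_app_or in Hp. destruct Hp as [Hp|Hp]; apply in_map_iff in Hp;
      destruct Hp as [c [<- _]]; simpl; apply M_iter; auto. }
    specialize (H Hin).
    assert (Hpt : forall x, True -> 0 <= 0 + lsum (map (fun c => (1, fun y => A (Nat.iter c T y))) (seq 0 (L + K)) ++
                      map (fun c => (- beta, fun y => Bmax A beta K (Nat.iter c T y))) (seq 0 L)) x).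
    { intros x _. rewrite lsum_app, !lsum_map. pose proof (count_lemma A beta K x Hb L 0). lra. }
    specialize (H Hpt). lra. }
  destruct (Rle_dec (beta * mu (Bmax A beta K)) (mu A)) as [|Hn]; auto. exfalso.
  destruct (INR_unbounded (INR K * mu A / (beta * mu (Bmax A beta K) - mu A))) as [L HL].
  specialize (Hineq L). rewrite plus_INR in Hineq.
  assert (Hd : 0 < beta * mu (Bmax A beta K) - mu A) by lra.
  apply (Rmult_lt_compat_r (beta * mu (Bmax A beta K) - mu A)) in HL; auto.
  unfold Rdiv in HL. rewrite Rmult_assoc, Rinv_l, Rmult_1_r in HL by lra. nra.
Qed.

Lemma maximal A beta : M A -> 0 < beta ->
  mu (fun x => exists K, Bmax A beta K x) <= mu A / beta.
Proof.
  intros HA Hb. apply mu_incr_le.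
  - intro; apply M_Bmax; auto.
  - intros n x [k [Hk Hx]]. exists k; split; auto.
  - intro K. pose proof (maximal_fin A beta K HA ltac:(lra)).
    apply Rmult_le_reg_l with beta; auto. unfold Rdiv. rewrite <- Rmult_assoc, (Rmult_comm beta (mu A)), Rmult_assoc, Rinv_r, Rmult_1_r by lra. lra.
Qed.


Context (Herg : ergodic M mu T).

Definition Ub (A : X -> Prop) (beta : R) (x : X) : Prop :=
  forall K : nat, exists n : nat, Dn A n x - beta * INR n >= INR K.

Lemma M_Ub A beta : M A -> M (Ub A beta).
Proof.
  intro HA. unfold Ub. apply M_call; intro K. apply M_cunion; intro n.
  apply (mf_ge (fun x => Dn A n x + (- (beta * INR n)))).
  apply mf_plus; [apply mf_Dn; auto|apply mf_const].
Qed.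

Lemma Ub_inv A beta x : 0 <= beta -> (Ub A beta (T x) <-> Ub A beta x).
Proof.
  intro Hb. split.
  - intros H K. destruct (INR_unbounded (INR K + beta)) as [K' HK'].
    destruct (H K') as [n Hn]. exists (S n). rewrite Dn_S, S_INR.
    pose proof (ind_bnd A x). lra.
  - intros H K. destruct (H (S K)) as [n Hn]. destruct n as [|n].
    + unfold Dn in Hn; rewrite S_INR in Hn. simpl sumr in Hn. change (INR 0) with 0 in Hn. pose proof (pos_INR K). lra.
    + exists n. rewrite Dn_S, !S_INR in Hn. pose proof (ind_bnd A x). lra.
Qed.

Lemma Ub_null A beta : M A -> mu A < beta -> mu (Ub A beta) = 0.
Proof.
  intros HA Hlt.
  assert (HA0 := mu_nonneg A HA).
  assert (Hb : 0 < beta) by lra.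
  destruct (Herg (Ub A beta) (M_Ub A beta HA) (fun x => Ub_inv A beta x ltac:(lra))) as [|H1]; auto.
  exfalso.
  pose proof (maximal A beta HA Hb) as Hm.
  assert (Hsub : mu (Ub A beta) <= mu (fun x => exists K, Bmax A beta K x)).
  { apply mu_mono; [apply M_Ub; auto| apply M_cunion; intro; apply M_Bmax; auto|].
    intros x Hx. destruct (Hx 1%nat) as [n Hn]. exists n, n. split; auto. simpl in Hn. lra. }
  assert (mu A / beta < 1).
  { apply Rmult_lt_reg_r with beta; auto. unfold Rdiv. rewrite Rmult_assoc, Rinv_l by lra. lra. }
  lra.
Qed.


Lemma iter_inv a : forall b y, Nat.iter a Tinv (Nat.iter (a + b) T y) = Nat.iter b T y.
Proof.
  destruct HT as [Hi _].
  induction a; intros b y; [reflexivity|].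
  rewrite Nat.iter_succ_r.
  change (Nat.iter (S a + b) T y) with (T (Nat.iter (a + b) T y)).
  rewrite Hi. apply IHa.
Qed.

Lemma Tpow_nat n y : Tpow T Tinv (Z.of_nat n) y = Nat.iter n T y.
Proof. destruct n; simpl; auto. rewrite SuccNat2Pos.id_succ. auto. Qed.

Lemma Tpow_negnat n y : Tpow T Tinv (- Z.of_nat n) y = Nat.iter n Tinv y.
Proof. destruct n; simpl; auto. rewrite SuccNat2Pos.id_succ. auto. Qed.

Lemma Tpow_iter j k c x : (k <= c)%nat ->
  Tpow T Tinv (Z.of_nat j - Z.of_nat k) (Nat.iter c T x) = Nat.iter (c - k + j) T x.
Proof.
  intro Hkc. destruct (le_lt_dec k j) as [Hkj|Hjk].
  - replace (Z.of_nat j - Z.of_nat k)%Z with (Z.of_nat (j - k)) by lia.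
    rewrite Tpow_nat, <- Nat.iter_add. f_equal; lia.
  - replace (Z.of_nat j - Z.of_nat k)%Z with (- Z.of_nat (k - j))%Z by lia.
    rewrite Tpow_negnat.
    rewrite <- (iter_inv (k - j) (c - k + j) x). f_equal. f_equal. lia.
Qed.

Lemma ind_compl (A : X -> Prop) y : ind (fun z => ~ A z) y = 1 - ind A y.
Proof.
  destruct (classic (A y)).
  - rewrite ind_0 by tauto. rewrite ind_1 by auto. ring.
  - rewrite ind_1 by auto. rewrite ind_0 by auto. ring.
Qed.

Lemma main_in (f : X -> R) (Hf : mf f)
  (Hpos : mu (fun x => exists N : nat, (N > 0)%nat /\
                   forall n : nat, (n > N)%nat -> Bavg T Tinv f n x <= 0) > 0) :
  exists Nul : X -> Prop, M Nul /\ mu Nul = 0 /\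
    forall x, ~ Nul x -> exists C : R, forall n : nat, (n > 0)%nat -> Bsum T f n x <= C.
Proof.
  set (EN := fun N x => (N > 0)%nat /\ forall n, (n > N)%nat -> Bavg T Tinv f n x <= 0).
  assert (HEN : forall N, M (EN N)).
  { intro N. unfold EN. apply M_and_const. apply M_call. intro n. apply M_imp_const.
    apply mf_Bavg; auto. }
  assert (HexN : exists N, mu (EN N) > 0).
  { apply NNPP; intro Hn.
    assert (Hle : mu (fun x => exists N, EN N x) <= 0).
    { apply mu_incr_le; auto.
      - intros N x [HN Hx]. split; [lia|]. intros n Hn'. apply Hx; lia.
      - intro N. apply Rnot_lt_le. intro; apply Hn; eauto. }
    unfold EN in Hle. lra. }
  destruct HexN as [N HN].
  set (A := EN N) in *.
  assert (HA : M A) by apply HEN.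
  remember (mu A) as p eqn:Hpdef.
  assert (Hp1 : p <= 1) by (rewrite Hpdef; apply mu_le1; auto).
  set (A' := fun x => ~ A x).
  assert (HA' : M A') by (apply M_compl; auto).
  assert (HmuA' : mu A' = 1 - p) by (rewrite Hpdef; apply mu_compl; auto).
  exists (fun x => Ub A (5 * p / 4) x \/ Ub A' (1 - 3 * p / 4) x).
  split; [apply M_or; apply M_Ub; auto|].
  split.
  { pose proof (mu_subadd _ _ (M_Ub A (5 * p / 4) HA) (M_Ub A' (1 - 3 * p / 4) HA')).
    rewrite (Ub_null A) in H by (auto; lra).
    rewrite (Ub_null A') in H by (auto; lra).
    pose proof (mu_nonneg _ (M_or _ _ (M_Ub A (5 * p / 4) HA) (M_Ub A' (1 - 3 * p / 4) HA'))). lra. }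
  intros x Hx.
  assert (HU1 : ~ Ub A (5 * p / 4) x) by tauto.
  assert (HU2 : ~ Ub A' (1 - 3 * p / 4) x) by tauto.
  unfold Ub in HU1, HU2.
  apply not_all_ex_not in HU1. destruct HU1 as [K1 HK1].
  apply not_all_ex_not in HU2. destruct HU2 as [K2 HK2].
  assert (H1 : forall n, sumr (fun c => ind A (Nat.iter c T x)) 0 n - 5 * p / 4 * INR n < INR K1).
  { intro n. apply Rnot_ge_lt. intro H. apply HK1. exists n. exact H. }
  assert (H2 : forall n, sumr (fun c => ind A (Nat.iter c T x)) 0 n > 3 * p / 4 * INR n - INR K2).
  { intro n. assert (H : ~ (Dn A' n x - (1 - 3 * p / 4) * INR n >= INR K2)) by (intro H; apply HK2; eauto).
    unfold Dn, A' in H.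
    rewrite (sumr_ext _ (fun i => 1 - ind A (Nat.iter i T x))) in H by (intros; apply ind_compl).
    rewrite sumr_compl in H. lra. }
  destruct (gap_gen (fun c => ind A (Nat.iter c T x)) (fun c => A (Nat.iter c T x)) p N K1 K2
             ltac:(lra) (fun c Hc => ind_0 _ _ Hc) H1 H2) as [M0 HM0].
  exists (mx (fun j => sumr (fun i => f (Nat.iter i T x)) 0 j) M0).
  intros n Hn.
  assert (Hb : forall m, sumr (fun i => f (Nat.iter i T x)) 0 m <=
                         mx (fun j => sumr (fun i => f (Nat.iter i T x)) 0 j) M0).
  { apply (bound_gen _ (fun c => A (Nat.iter c T x)) N M0); auto.
    intros c k Hc Hk1 Hk2.
    destruct Hc as [_ Hc]. specialize (Hc k Hk2). unfold Bavg in Hc.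
    rewrite sum_f_R0_sumr in Hc.
    rewrite (sumr_ext _ (fun j => f (Nat.iter (c - k + j) T x))) in Hc
      by (intros; rewrite Tpow_iter; auto).
    pose proof (sumr_shift (fun i => f (Nat.iter i T x)) (S (2 * k)) (c - k) 0) as E.
    rewrite Nat.add_0_r in E. rewrite <- E in Hc.
    replace (2 * k + 1)%nat with (S (2 * k)) by lia.
    assert (Hpos' : 0 < / INR (2 * k + 1)) by (apply Rinv_0_lt_compat, lt_0_INR; lia).
    apply Rnot_lt_le. intro Hlt. 
    pose proof (Rmult_lt_0_compat _ _ Hpos' Hlt). lra. }
  destruct n as [|n]; [lia|]. simpl Bsum. rewrite sum_f_R0_sumr. apply Hb.
Qed.

End Meas.

Theorem lemma2 (X : Type) (M : (X -> Prop) -> Prop) (mu : (X -> Prop) -> R)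
    (T Tinv : X -> X) (f : X -> R)
    (Hprob : is_probability_space M mu)
    (HT : invertible_mpt M mu T Tinv)
    (Herg : ergodic M mu T)
    (Hf : measurable_fun M f)
    (Hpos : mu (fun x => exists N : nat, (N > 0)%nat /\
                   forall n : nat, (n > N)%nat -> Bavg T Tinv f n x <= 0) > 0) :
  exists Nul : X -> Prop, M Nul /\ mu Nul = 0 /\
    forall x, ~ Nul x -> exists C : R, forall n : nat, (n > 0)%nat -> Bsum T f n x <= C.
Proof.
  exact (main_in M mu Hprob T Tinv HT Herg f Hf Hpos).
Qed.
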